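(* Let $A=\langle Q,F,\delta,\gamma\rangle$ be a well-structured pomset automaton and let $q\in Q$ be a fork target, i.e. there exist $p\in Q$ and $\phi\in\mathbb{M}(Q)$ with $q\in\phi$ and $\gamma(p,\phi)\neq\emptyset$. Then every pomset in $L_A(q)$ is a parallel prime.
   Context: Fix a finite alphabet $\Sigma$. Pomsets are isomorphism classes of finite labelled posets over $\Sigma$; $1$ is the empty pomset; sequential composition $U\cdot V$ is the disjoint union with every element of $U$ below every element of $V$; parallel composition $U\parallel V$ is the disjoint union of the orders. $\mathsf{SP}(\Sigma)$ is the smallest set containing $1$ and the one-element pomsets, closed under $\cdot,\parallel$. A pomset $U$ is a parallel prime if it is non-empty and whenever $U=V\parallel W$ we have $V=1$ or $W=1$. A pomset automaton is $A=\langle Q,F,\delta,\gamma\rangle$ with $F\subseteq Q$, $\delta:Q\times\Sigma\to2^Q$, $\gamma:Q\times\mathbb{M}(Q)\to2^Q$ ($\mathbb{M}(Q)$ finite multisets over $Q$), each $q$ having finitely many $\phi$ with $\gamma(q,\phi)\ne\emptyset$. The run relation $\to_A$ is the smallest relation with: $q\xrightarrow{1}_A q$; $q\xrightarrow{a}_A q'$ if $q'\in\delta(q,a)$; $q\xrightarrow{U\cdot V}_A q'$ if $q\xrightarrow{U}_A q''\xrightarrow{V}_A q'$; $q\xrightarrow{U_1\parallel\cdots\parallel U_n}_A q'$ if $q'\in\gamma(q,\{\!|q_1,\dots,q_n|\!\})$ and each $q_i\xrightarrow{U_i}_A q_i'$ for some $q_i'\in F$. $L_A(q)=\{U\in\mathsf{SP}(\Sigma)\mid\exists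 q'\in F.\ q\xrightarrow{U}_A q'\}$. $A$ is well-structured if for all $q,q'$, $\phi$ with $q'\in\phi$ and $\gamma(q,\phi)\ne\emptyset$: $|\phi|\ge2$, $q'\notin F$, and $\gamma(q',\phi')\cap F=\emptyset$ for every $\phi'$. *)

(* Defs.v *)
From mathcomp Require Import all_boot.
From mathcomp Require Import finmap multiset.
From Stdlib Require Import List.
Set Implicit Arguments.
Unset Strict Implicit.
Unset Printing Implicit Defensive.
Local Open Scope mset_scope.

(** A pomset is an isomorphism class of finite labelled posets.  We work with
    concrete representatives (carrier ['I_n]) and define every notion below
    (compositions, SP, runs, primality) invariantly under isomorphism: e.g.
    [is_par U V W] says that U is isomorphic to the parallel composition of
    V and W. *)
Record lposet (S : Type) := LPoset {
  lp_size : nat;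
  lp_lab : 'I_lp_size -> S;
  lp_le : rel 'I_lp_size;
  lp_refl : reflexive lp_le;
  lp_anti : antisymmetric lp_le;
  lp_trans : transitive lp_le
}.
Arguments lp_size {S}.
Arguments lp_lab {S}.
Arguments lp_le {S}.

Section Pomsets.
Variable S : Type.
Implicit Types U V W : lposet S.

Definition is_empty U : Prop := lp_size U = 0.

Definition is_atom U (a : S) : Prop :=
  lp_size U = 1 /\ forall x, lp_lab U x = a.

Definition is_par U V W : Prop :=
  exists f : 'I_(lp_size U) -> 'I_(lp_size V) + 'I_(lp_size W),
    bijective f /\
    (forall x, lp_lab U x = match f x with inl a => lp_lab V a
                                        | inr b => lp_lab W b end) /\
    (forall x y, lp_le U x y =
       match f x, f y with
       | inl a, inl b => lp_le V a b
       | inr a, inr b => lp_le W a b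
       | _, _ => false
       end).

Definition is_seq U V W : Prop :=
  exists f : 'I_(lp_size U) -> 'I_(lp_size V) + 'I_(lp_size W),
    bijective f /\
    (forall x, lp_lab U x = match f x with inl a => lp_lab V a
                                        | inr b => lp_lab W b end) /\
    (forall x y, lp_le U x y =
       match f x, f y with
       | inl a, inl b => lp_le V a b
       | inr a, inr b => lp_le W a b
       | inl _, inr _ => true
       | inr _, inl _ => false
       end).

Fixpoint is_parn U (Us : list (lposet S)) : Prop :=
  match Us with
  | nil => is_empty U
  | V :: Vs => exists W, is_par U V W /\ is_parn W Vs
  end.

Inductive sp : lposet S -> Prop :=
| sp_empty U : is_empty U -> sp U
| sp_atom U a : is_atom U a -> sp U
| sp_seq U V W : is_seq U V W -> sp V -> sp W -> sp U
| sp_par U V W : is_par U V W -> sp V -> sp W -> sp U.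

Definition parallel_prime U : Prop :=
  0 < lp_size U /\
  forall V W, is_par U V W -> is_empty V \/ is_empty W.

End Pomsets.

Record pa (S : Type) (Q : choiceType) := PA {
  pa_F : Q -> Prop;
  pa_delta : Q -> S -> Q -> Prop;
  pa_gamma : Q -> {mset Q} -> Q -> Prop;
  pa_gamma_fin : forall q, exists s : list {mset Q},
      forall phi, (exists q', pa_gamma q phi q') -> List.In phi s
}.

Section Runs.
Variables (S : Type) (Q : choiceType) (A : pa S Q).

Inductive run : Q -> lposet S -> Q -> Prop :=
| run_unit q U : is_empty U -> run q U q
| run_atom q a q' U : pa_delta A q a q' -> is_atom U a -> run q U q'
| run_seq q q'' q' U V W :
    is_seq U V W -> run q V q'' -> run q'' W q' -> run q U q'
| run_par q q' U (l : list (Q * lposet S)) :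
    (0 < size l)%N ->
    pa_gamma A q (seq_mset (map fst l)) q' ->
    is_parn U (map snd l) ->
    (forall p, List.In p l -> exists qf, pa_F A qf /\ run p.1 p.2 qf) ->
    run q U q'.

Definition lang (q : Q) (U : lposet S) : Prop :=
  sp U /\ exists q', pa_F A q' /\ run q U q'.

Definition well_structured : Prop :=
  forall (q q' : Q) (phi : {mset Q}),
    q' \in phi -> (exists r, pa_gamma A q phi r) ->
    [/\ (2 <= size phi)%N, ~ pa_F A q' &
        forall phi' r, pa_gamma A q' phi' r -> ~ pa_F A r].

Definition fork_target (q : Q) : Prop :=
  exists (p : Q) (phi : {mset Q}), q \in phi /\ exists r, pa_gamma A p phi r.

End Runs.

(* Main.v *)
Require Import Defs.
Set Implicit Arguments.
Unset Strict Implicit.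
From mathcomp Require Import all_boot.
From mathcomp Require Import finmap multiset.
From Stdlib Require Import List.

Lemma size_sum_bij n a b (f : 'I_n -> 'I_a + 'I_b) : bijective f -> n = a + b.
Proof. by move/bij_eq_card; rewrite card_sum !card_ord. Qed.

Lemma par_size (S : Type) (U V W : lposet S) :
  is_par U V W -> lp_size U = lp_size V + lp_size W.
Proof. by case=> f [fb _]; apply: size_sum_bij fb. Qed.

Lemma seq_size (S : Type) (U V W : lposet S) :
  is_seq U V W -> lp_size U = lp_size V + lp_size W.
Proof. by case=> f [fb _]; apply: size_sum_bij fb. Qed.

Lemma empty_run (S : Type) (Q : choiceType) (A : pa S Q) :
  well_structured A ->
  forall q U q', run A q U q' -> lp_size U = 0 -> q = q'.
Proof.
move=> ws; fix IH 4 => q U q' d.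
case: d.
- by [].
- by move=> q0 a q1 U0 _ [h1 _]; rewrite h1.
- move=> q0 q'' q1 U0 V W hs r1 r2 h0.
  move: (seq_size hs); rewrite h0 => /esym /eqP; rewrite addn_eq0 => /andP [/eqP hV /eqP hW].
  by rewrite (IH _ _ _ r1 hV) (IH _ _ _ r2 hW).
- move=> q0 q1 U0 l hl hg hp hall h0.
  case: l hl hg hp hall => [|p l] // _ hg hp hall.
  case: hp => W [hpar _].
  move: (par_size hpar); rewrite h0 => /esym /eqP; rewrite addn_eq0 => /andP [/eqP hV _].
  case: (hall p (in_eq p l)) => qf [Fqf rr].
  have e := IH _ _ _ rr hV.
  exfalso.
  have hin : p.1 \in seq_mset (map fst (p :: l)).
    by rewrite (perm_mem (perm_eq_seq_mset _)) /= mem_head.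
  case: (ws _ _ _ hin (ex_intro _ q1 hg)) => _ nF _.
  by apply: nF; rewrite e.
Qed.

Lemma pp_transport (S : Type) (U W : lposet S)
  (j : 'I_(lp_size W) -> 'I_(lp_size U)) :
  injective j -> lp_size U = lp_size W ->
  (forall w, lp_lab W w = lp_lab U (j w)) ->
  (forall a b, lp_le W a b = lp_le U (j a) (j b)) ->
  parallel_prime W -> parallel_prime U.
Proof.
move=> ji e hl hle [ppW ppW2]; split; first by rewrite e.
move=> X Y [g [gb [gl gle]]]; apply: ppW2.
exists (g \o j); split.
  apply: bij_comp => //; apply: inj_card_bij => //; by rewrite !card_ord e.
split=> [x|x y] /=; first by rewrite hl gl.
by rewrite hle gle.
Qed.

Lemma pp_seq (S : Type) (U V W : lposet S) :
  is_seq U V W -> 0 < lp_size V -> 0 < lp_size W -> parallel_prime U.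
Proof.
case=> f [[finv c1 c2] [fl fle]] hV hW.
split; first by rewrite (size_sum_bij (Bijective c1 c2)) addn_gt0 hV.
move=> X Y [g [[ginv d1 d2] [gl gle]]].
pose side z := if g z is inl _ then true else false.
have key : forall x y, lp_le U x y -> side x = side y.
  by move=> x y; rewrite gle /side; case: (g x); case: (g y).
pose v0 := finv (inl (Ordinal hV)).
pose w0 := finv (inr (Ordinal hW)).
have vw : side v0 = side w0 by apply: key; rewrite fle /v0 /w0 !c2.
have all : forall z, side z = side v0.
  move=> z; case E: (f z) => [a|b].
    by rewrite vw; apply: key; rewrite fle E /w0 c2.
  by apply/esym/key; rewrite fle E /v0 c2.
rewrite /is_empty.
case Hs: (side v0).
  right; case: (posnP (lp_size Y)) => // hY; exfalso.
  have := all (ginv (inr (Ordinal hY))); by rewrite Hs /side d2.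
left; case: (posnP (lp_size X)) => // hX; exfalso.
have := all (ginv (inl (Ordinal hX))); by rewrite Hs /side d2.
Qed.

Lemma pp_run (S : Type) (Q : choiceType) (A : pa S Q) :
  well_structured A ->
  forall q U q', run A q U q' ->
  ~ pa_F A q -> (forall phi r, pa_gamma A q phi r -> ~ pa_F A r) ->
  pa_F A q' -> parallel_prime U.
Proof.
move=> ws q U q' d; elim: d.
- by move=> q0 U0 _ nF _ F.
- move=> q0 a q1 U0 _ [h1 _] _ _ _; split; first by rewrite h1.
  move=> X Y /par_size; rewrite h1 /is_empty.
  case: (lp_size X) => [|[|n]] //=; first by left.
  by case: (lp_size Y) => //; right.
- move=> q0 q'' q1 U0 V W hs r1 IH1 r2 IH2 nF ng Fq1.
  case: (posnP (lp_size V)) => hV.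
    have e := empty_run ws r1 hV; subst q''.
    have ppW := IH2 nF ng Fq1.
    case: hs => f [[finv c1 c2] [fl fle]].
    apply: (pp_transport (j := fun w => finv (inr w))) ppW.
    + by move=> a b /(congr1 f); rewrite !c2 => -[].
    + by rewrite (size_sum_bij (Bijective c1 c2)) hV.
    + by move=> w; rewrite fl c2.
    + by move=> a b; rewrite fle !c2.
  case: (posnP (lp_size W)) => hW; last exact: pp_seq hs hV hW.
  have e := empty_run ws r2 hW; subst q''.
  have ppV := IH1 nF ng Fq1.
  case: hs => f [[finv c1 c2] [fl fle]].
  apply: (pp_transport (j := fun w => finv (inl w))) ppV.
  + by move=> a b /(congr1 f); rewrite !c2 => -[].
  + by rewrite (size_sum_bij (Bijective c1 c2)) hW addn0.
  + by move=> w; rewrite fl c2.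
  + by move=> a b; rewrite fle !c2.
- move=> q0 q1 U0 l _ hg _ _ _ ng Fq1.
  by case: (ng _ _ hg).
Qed.

Theorem lemma5p6 (S : finType) (Q : choiceType) (A : pa S Q) :
  well_structured A ->
  forall q : Q, fork_target A q ->
  forall U : lposet S, lang A q U -> parallel_prime U.
Proof.
move=> ws q [p [phi [hin hex]]] U [_ [q' [Fq' r]]].
case: (ws _ _ _ hin hex) => _ nF ng.
exact: (pp_run ws r nF ng Fq').
Qed.
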